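(* Let $k,l,m$ be positive integers. Suppose $A(x)=\sum_{i=0}^{k-1}a_ix^i$ is a monic polynomial of degree $k-1$, $B$ is a polynomial, and $c\in\mathbb C$, $c\ne0$, are such that $$(x-1)^l A(x)^m-x^kB(x)=c.$$ Then $A$ satisfies the differential equation $$m\,A'(x)\,(x-1)+l\,A(x)=\big(m(k-1)+l\big)\,x^{k-1};$$ consequently its coefficients are given by $a_{k-1}=1$ and $a_i=\dfrac{m(i+1)}{mi+l}\,a_{i+1}$ for $0\le i\le k-2$. Moreover $c=(-1)^l a_0^m$.
   Context: This is the normalization of the Shabat polynomial/Davenport–Zannier pair $P=(x-1)^lA^m$, $Q=x^kB$ for an ordinary tree of diameter 4 (series $F$). *)

(* Defs.v *)
From mathcomp Require Import all_boot all_order all_algebra all_field.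

(* Main.v *)
Require Import Defs.
From mathcomp Require Import all_boot all_order all_algebra all_field.
From mathcomp Require Import ring zify.
Import GRing.Theory Num.Theory.
Local Open Scope ring_scope.

Theorem mainTheorem7 (k l m : nat) (A B : {poly algC}) (c : algC) :
  (0 < k)%N -> (0 < l)%N -> (0 < m)%N ->
  A \is monic -> size A = k ->
  c != 0 ->
  ('X - 1) ^+ l * A ^+ m - 'X ^+ k * B = c%:P ->
  [/\ m%:R *: (A^`() * ('X - 1)) + l%:R *: A
        = (m * (k - 1) + l)%:R *: 'X ^+ (k - 1),
      A`_(k - 1) = 1,
      (forall i : nat, (i + 2 <= k)%N ->
         A`_i = (m * (i + 1))%:R / (m * i + l)%:R * A`_(i + 1))
    & c = (-1) ^+ l * (A`_0) ^+ m].
Proof.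
move=> k0 l0 m0 monA szA c0 E.
have Ec : c = (-1) ^+ l * (A`_0) ^+ m.
  have := congr1 (fun p => p.[0]) E => /=.
  rewrite hornerD hornerN !hornerM !hornerXn !hornerE expr0n eqn0Ngt k0 mul0r subr0.
  by rewrite -horner_coef0 => ->.
have a00 : A`_0 != 0.
  apply: contra c0 => /eqP a0; rewrite Ec a0 expr0n eqn0Ngt m0 mulr0 //.
set Q := m%:R *: (A^`() * ('X - 1)) + l%:R *: A.
have coefQ : forall i, Q`_i = (l%:R + m%:R * i%:R) * A`_i - m%:R * (i.+1)%:R * A`_i.+1.
  move=> i; rewrite /Q coefD !coefZ mulrBr mulr1 coefB coefMX !coef_deriv.
  case: i => [|i]. rewrite eqxx mulr0n mulr1n mulr0 mulr1 addr0 sub0r. ring.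
  rewrite (_ : (i.+1 == 0)%N = false) //.
  by rewrite -[A`_i.+1 *+ _]mulr_natr -[A`_i.+2 *+ _]mulr_natr; ring.
have lA : A`_(k - 1) = 1.
  by move/monicP: monA; rewrite /lead_coef szA subn1.
have dvd : 'X ^+ (k - 1) %| Q.
  have dP : 'X ^+ (k - 1) %| (('X - 1) ^+ l * A ^+ m)^`().
    have -> : ('X - 1) ^+ l * A ^+ m = 'X ^+ k * B + c%:P.
      by rewrite -E; ring.
    rewrite derivD derivC addr0 derivM derivXn.
    apply/dvdpP; exists ((B *+ k) + 'X * B^`()).
    case: k k0 {szA lA E} => // k' _; rewrite subn1 succnK exprS; ring.
  rewrite /Q; clear coefQ Q.
  case: l l0 {E Ec} dP => // l' _; case: m m0 => // m' _ dP.
  have e : (('X - 1) ^+ l'.+1 * A ^+ m'.+1)^`() =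
     (('X - 1) ^+ l' * A ^+ m') * (m'.+1%:R *: (A^`() * ('X - 1)) + l'.+1%:R *: A).
    rewrite derivM !deriv_exp derivB derivX derivC subr0 !succnK.
    rewrite !scaler_nat !exprS. ring.
  rewrite e Gauss_dvdpr in dP => //.
  apply: coprimep_expl.
  rewrite coprimepMr; apply/andP; split; apply: coprimep_expr; rewrite coprimep_sym.
    have -> : 'X = 'X - 0%:P :> {poly algC} by rewrite subr0.
    rewrite coprimep_XsubC rootE !hornerE; apply/eqP.
    by apply/eqP; rewrite oppr0 sub0r oppr_eq0 oner_eq0.
  have -> : 'X = 'X - 0%:P :> {poly algC} by rewrite subr0.
  by rewrite coprimep_XsubC rootE horner_coef0.
have Q0 : forall i, (i < k - 1)%N -> Q`_i = 0.
  move=> i ilt; case/dvdpP: dvd => r ->; by rewrite coefMXn ilt.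
have szQ : forall i, (k <= i)%N -> Q`_i = 0.
  move=> i ki; rewrite coefQ !nth_default ?szA //; first by idtac; ring.
  by apply: leq_trans ki _.
have char0 : forall n : nat, (n%:R == 0 :> algC) = (n == 0)%N.
  by move=> n; rewrite pnatr_eq0.
split=> //.
- apply/polyP => i; rewrite coefZ coefXn.
  case: (ltngtP i (k - 1)) => [ilt|igt|->].
  + by rewrite Q0 // mulr0.
  + by rewrite mulr0 szQ //; lia.
  + rewrite coefQ lA mulr1 [A`__]nth_default; last by rewrite szA; lia.
    rewrite !natrD !natrM mulr0 subr0 mulr1; ring.
- move=> i ik.
  have ilt : (i < k - 1)%N by lia.
  have := Q0 i ilt; rewrite coefQ => /eqP; rewrite subr_eq0 => /eqP h.
  have nz : (m * i + l)%:R != 0 :> algC by rewrite pnatr_eq0; lia.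
  rewrite natrM addn1 mulrAC -h.
  rewrite natrD natrM in nz *.
  by field.
Qed.
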